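(* Let $G$ be a plane embedded graph whose external boundary is a simple cycle, and let $f$ be a convex combination map of $G$ which is an embedding. Then every bounded face of the straight-edge embedding determined by $f$ is convex.
   Context: Vertices on the external boundary cycle $C$ are external, others internal. A convex combination map of $G$ is a map $f$ from vertices to $\mathbb{R}^2$ such that the external vertices are mapped bijectively, in cyclic order along $C$, to the corners of a convex polygon $P$, and there are coefficients $\lambda_{uv}\ge0$, $\sum_v\lambda_{uv}=1$, $\lambda_{uv}>0$ iff ($u$ internal and $v$ a neighbour of $u$), with $f(u)=\sum_v\lambda_{uv}f(v)$ for every internal $u$. $f$ is an embedding if vertex images are distinct and the segments $[f(u),f(v)]$ for edges $\{u,v\}$ have pairwise disjoint relative interiors containing no vertex images. *)

(* Defs.v *)
From Stdlib Require Import Reals Lra List.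
Import ListNotations.
Open Scope R_scope.

Definition pt := (R * R)%type.

Definition padd (a b : pt) : pt := (fst a + fst b, snd a + snd b).
Definition pscale (t : R) (a : pt) : pt := (t * fst a, t * snd a).

Definition lerp (a b : pt) (t : R) : pt := padd (pscale (1 - t) a) (pscale t b).

Definition closed_seg (a b x : pt) : Prop :=
  exists t, 0 <= t <= 1 /\ x = lerp a b t.
Definition open_seg (a b x : pt) : Prop :=
  exists t, 0 < t < 1 /\ x = lerp a b t.

Definition orient (a b c : pt) : R :=
  (fst b - fst a) * (snd c - snd a) - (snd b - snd a) * (fst c - fst a).

Fixpoint rsum (n : nat) (g : nat -> R) : R :=
  match n with
  | O => 0
  | S m => rsum m g + g m
  end.

Definition simple_graph (n : nat) (adj : nat -> nat -> Prop) : Prop :=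
  (forall u v, adj u v -> (u < n)%nat /\ (v < n)%nat) /\
  (forall u v, adj u v -> adj v u) /\
  (forall u, ~ adj u u).

Definition simple_cycle (n : nat) (adj : nat -> nat -> Prop) (C : list nat) : Prop :=
  (3 <= length C)%nat /\ NoDup C /\ (forall v, In v C -> (v < n)%nat) /\
  (forall i, (i < length C)%nat ->
     adj (nth i C O) (nth (S i mod length C) C O)).

Definition external (C : list nat) (v : nat) : Prop := In v C.
Definition internal (n : nat) (C : list nat) (v : nat) : Prop :=
  (v < n)%nat /\ ~ In v C.

Definition convex_polygon_corners (k : nat) (P : nat -> pt) : Prop :=
  (3 <= k)%nat /\
  exists s : R, (s = 1 \/ s = -1) /\
    forall i j, (i < k)%nat -> (j < k)%nat -> j <> i -> j <> (S i mod k)%nat ->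
      0 < s * orient (P i) (P (S i mod k)) (P j).

Definition convex_combination_map (n : nat) (adj : nat -> nat -> Prop)
    (C : list nat) (f : nat -> pt) : Prop :=
  (forall i j, (i < length C)%nat -> (j < length C)%nat ->
      f (nth i C O) = f (nth j C O) -> i = j) /\
  convex_polygon_corners (length C) (fun i => f (nth i C O)) /\
  exists lam : nat -> nat -> R,
    forall u, internal n C u ->
      (forall v, (v < n)%nat -> 0 <= lam u v) /\
      (forall v, (v < n)%nat -> (0 < lam u v <-> adj u v)) /\
      rsum n (fun v => lam u v) = 1 /\
      fst (f u) = rsum n (fun v => lam u v * fst (f v)) /\
      snd (f u) = rsum n (fun v => lam u v * snd (f v)).

Definition is_embedding (n : nat) (adj : nat -> nat -> Prop) (f : nat -> pt) : Prop :=
  (forall u v, (u < n)%nat -> (v < n)%nat -> f u = f v -> u = v) /\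
  (forall u v u' v', adj u v -> adj u' v' ->
     ~ ((u = u' /\ v = v') \/ (u = v' /\ v = u')) ->
     forall x, open_seg (f u) (f v) x -> ~ open_seg (f u') (f v') x) /\
  (forall u v w, adj u v -> (w < n)%nat -> ~ open_seg (f u) (f v) (f w)).

Definition drawing (n : nat) (adj : nat -> nat -> Prop) (f : nat -> pt) (x : pt) : Prop :=
  (exists v, (v < n)%nat /\ x = f v) \/
  (exists u v, adj u v /\ closed_seg (f u) (f v) x).

Definition path_in_compl (D : pt -> Prop) (x y : pt) : Prop :=
  exists g : R -> pt,
    continuity (fun t => fst (g t)) /\ continuity (fun t => snd (g t)) /\
    g 0 = x /\ g 1 = y /\ (forall t, 0 <= t <= 1 -> ~ D (g t)).

Definition face (n : nat) (adj : nat -> nat -> Prop) (f : nat -> pt) (F : pt -> Prop) : Prop :=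
  exists x0, ~ drawing n adj f x0 /\
    forall x, F x <-> path_in_compl (drawing n adj f) x0 x.

Definition bounded_region (F : pt -> Prop) : Prop :=
  exists M, forall x, F x -> Rabs (fst x) <= M /\ Rabs (snd x) <= M.

Definition convex_set (F : pt -> Prop) : Prop :=
  forall x y t, F x -> F y -> 0 <= t <= 1 -> F (lerp x y t).

(* Main.v *)
Require Import Defs.
From Stdlib Require Import Reals List.
From Stdlib Require Import Lra Lia Psatz Classical.
Import ListNotations.
Open Scope R_scope.


Lemma rsum_ext n g h : (forall v, (v < n)%nat -> g v = h v) -> rsum n g = rsum n h.
Proof.
  induction n; simpl; intros H; [reflexivity|].
  rewrite IHn by (intros; apply H; lia). rewrite H by lia. reflexivity.
Qed.

Lemma rsum_aff n (l x y : nat -> R) a b c :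
  rsum n (fun v => l v * (a * x v + b * y v + c)) =
  a * rsum n (fun v => l v * x v) + b * rsum n (fun v => l v * y v) + c * rsum n l.
Proof. induction n; simpl; [ring|]. rewrite IHn. ring. Qed.

Lemma rsum_sub n (g h : nat -> R) : rsum n (fun v => g v - h v) = rsum n g - rsum n h.
Proof. induction n; simpl; [ring|]. rewrite IHn. ring. Qed.

Lemma rsum_nonneg n g : (forall v, (v < n)%nat -> 0 <= g v) -> 0 <= rsum n g.
Proof.
  induction n; simpl; intros H; [lra|].
  assert (0 <= rsum n g) by (apply IHn; intros; apply H; lia).
  assert (0 <= g n) by (apply H; lia). lra.
Qed.

Lemma rsum_nonneg_zero n g : (forall v, (v < n)%nat -> 0 <= g v) -> rsum n g = 0 ->
  forall v, (v < n)%nat -> g v = 0.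
Proof.
  induction n; simpl; intros H Hs v Hv; [lia|].
  assert (0 <= rsum n g) by (apply rsum_nonneg; intros; apply H; lia).
  assert (0 <= g n) by (apply H; lia).
  destruct (Nat.eq_dec v n) as [->|Hne]; [lra|].
  apply IHn; [intros; apply H; lia | lra | lia].
Qed.

Lemma rsum_exists_nz n g : rsum n g <> 0 -> exists v, (v < n)%nat /\ g v <> 0.
Proof.
  induction n; simpl; intros H; [lra|].
  destruct (Req_dec (g n) 0) as [E|E].
  - destruct IHn as [v [Hv Hg]]; [lra|]. exists v; split; [lia|auto].
  - exists n; split; [lia|auto].
Qed.

Definition lexlt (a1 a2 b1 b2 : R) := a1 < b1 \/ (a1 = b1 /\ a2 < b2).

Lemma lexmin (Q : nat -> Prop) (phi psi : nat -> R) N :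
  (exists v, (v < N)%nat /\ Q v) ->
  exists v, (v < N)%nat /\ Q v /\
    forall w, (w < N)%nat -> Q w -> ~ lexlt (phi w) (psi w) (phi v) (psi v).
Proof.
  induction N; intros [v0 [Hv0 Q0]]; [lia|].
  destruct (classic (exists v, (v < N)%nat /\ Q v)) as [Hex|Hnex].
  - destruct (IHN Hex) as [m [Hm [Qm Hmin]]].
    destruct (classic (Q N /\ lexlt (phi N) (psi N) (phi m) (psi m))) as [[QN Hlt]|Hno].
    + exists N; split; [lia|split; auto].
      intros w Hw Qw Hl. destruct (Nat.eq_dec w N) as [->|Hne].
      * unfold lexlt in Hl; lra.
      * apply (Hmin w); [lia|auto|]. unfold lexlt in *; lra.
    + exists m; split; [lia|split; auto].
      intros w Hw Qw Hl. destruct (Nat.eq_dec w N) as [->|Hne].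
      * apply Hno; auto.
      * apply (Hmin w); [lia|auto|auto].
  - exists N; split; [lia|]. split.
    + destruct (Nat.eq_dec v0 N) as [<-|Hne]; auto. exfalso; apply Hnex; exists v0; split; [lia|auto].
    + intros w Hw Qw Hl. destruct (Nat.eq_dec w N) as [->|Hne].
      * unfold lexlt in Hl; lra.
      * apply Hnex; exists w; split; [lia|auto].
Qed.

Definition aff (a b c : R) (p : pt) := a * fst p + b * snd p + c.

Record setting (n : nat) (adj : nat -> nat -> Prop) (C : list nat) (f : nat -> pt)
  (s : R) (lam : nat -> nat -> R) : Prop := mkS {
  S_sg : simple_graph n adj;
  S_sc : simple_cycle n adj C;
  S_s : s = 1 \/ s = -1;
  S_poly : forall i j, (i < length C)%nat -> (j < length C)%nat -> j <> i ->
      j <> (S i mod length C)%nat ->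
      0 < s * orient (f (nth i C O)) (f (nth (S i mod length C) C O)) (f (nth j C O));
  S_lam : forall u, internal n C u ->
      (forall v, (v < n)%nat -> 0 <= lam u v) /\
      (forall v, (v < n)%nat -> (0 < lam u v <-> adj u v)) /\
      rsum n (fun v => lam u v) = 1 /\
      fst (f u) = rsum n (fun v => lam u v * fst (f v)) /\
      snd (f u) = rsum n (fun v => lam u v * snd (f v));
  S_emb : is_embedding n adj f }.



Lemma conv_aff n adj C f s lam u a b c : setting n adj C f s lam -> internal n C u ->
  aff a b c (f u) = rsum n (fun v => lam u v * aff a b c (f v)).
Proof.
  intros HS Hu. destruct (S_lam _ _ _ _ _ _ HS u Hu) as [_ [_ [H1 [Hx Hy]]]]. change (rsum n (fun v => lam u v)) with (rsum n (lam u)) in H1.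
  unfold aff. rewrite rsum_aff, <- Hx, <- Hy. rewrite H1. ring.
Qed.

Lemma nb_lex n adj C f s lam u a1 b1 c1 a2 b2 c2 :
  setting n adj C f s lam -> internal n C u -> a1 * b2 - a2 * b1 <> 0 ->
  exists v, (v < n)%nat /\ adj u v /\
    lexlt (aff a1 b1 c1 (f v)) (aff a2 b2 c2 (f v)) (aff a1 b1 c1 (f u)) (aff a2 b2 c2 (f u)).
Proof.
  intros HS Hu Hdet.
  destruct (S_lam _ _ _ _ _ _ HS u Hu) as [Hpos [Hadj [H1 _]]].
  apply NNPP; intro Hno.
  assert (Hge1 : forall v, (v < n)%nat -> adj u v -> aff a1 b1 c1 (f u) <= aff a1 b1 c1 (f v)).
  { intros v Hv Ha. apply Rnot_lt_le; intro Hl. apply Hno. exists v; repeat split; auto. left; auto. }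
  assert (Heq1 : forall v, (v < n)%nat -> adj u v -> aff a1 b1 c1 (f v) = aff a1 b1 c1 (f u)).
  { assert (Hz : forall v, (v < n)%nat -> lam u v * (aff a1 b1 c1 (f v) - aff a1 b1 c1 (f u)) = 0).
    { apply rsum_nonneg_zero.
      - intros v Hv. destruct (classic (adj u v)) as [Ha|Ha].
        + apply Rmult_le_pos; [apply Hpos; auto|]. specialize (Hge1 v Hv Ha). lra.
        + assert (lam u v = 0). { specialize (Hpos v Hv). destruct (Req_dec (lam u v) 0); auto.
            exfalso; apply Ha; apply Hadj; auto; lra. } rewrite H; lra.
      - rewrite (rsum_ext _ _ (fun v => lam u v * aff a1 b1 c1 (f v) - aff a1 b1 c1 (f u) * lam u v)).
        + rewrite rsum_sub. rewrite <- conv_aff with (s:=s) (C:=C) (adj:=adj); auto.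
          assert (rsum n (fun v => aff a1 b1 c1 (f u) * lam u v) = aff a1 b1 c1 (f u) * rsum n (fun v => lam u v)).
          { clear. induction n; simpl; [ring|]. rewrite IHn. ring. }
          rewrite H, H1. ring.
        + intros; ring. }
    intros v Hv Ha. specialize (Hz v Hv). assert (0 < lam u v) by (apply Hadj; auto).
    apply Rmult_integral in Hz. destruct Hz; lra. }
  assert (Hge2 : forall v, (v < n)%nat -> adj u v -> aff a2 b2 c2 (f u) <= aff a2 b2 c2 (f v)).
  { intros v Hv Ha. apply Rnot_lt_le; intro Hl. apply Hno. exists v; repeat split; auto. right; split; auto. }
  assert (Heq2 : forall v, (v < n)%nat -> adj u v -> aff a2 b2 c2 (f v) = aff a2 b2 c2 (f u)).
  { assert (Hz : forall v, (v < n)%nat -> lam u v * (aff a2 b2 c2 (f v) - aff a2 b2 c2 (f u)) = 0).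
    { apply rsum_nonneg_zero.
      - intros v Hv. destruct (classic (adj u v)) as [Ha|Ha].
        + apply Rmult_le_pos; [apply Hpos; auto|]. specialize (Hge2 v Hv Ha). lra.
        + assert (lam u v = 0). { specialize (Hpos v Hv). destruct (Req_dec (lam u v) 0); auto.
            exfalso; apply Ha; apply Hadj; auto; lra. } rewrite H; lra.
      - rewrite (rsum_ext _ _ (fun v => lam u v * aff a2 b2 c2 (f v) - aff a2 b2 c2 (f u) * lam u v)).
        + rewrite rsum_sub. rewrite <- conv_aff with (s:=s) (C:=C) (adj:=adj); auto.
          assert (rsum n (fun v => aff a2 b2 c2 (f u) * lam u v) = aff a2 b2 c2 (f u) * rsum n (fun v => lam u v)).
          { clear. induction n; simpl; [ring|]. rewrite IHn. ring. }
          rewrite H, H1. ring.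
        + intros; ring. }
    intros v Hv Ha. specialize (Hz v Hv). assert (0 < lam u v) by (apply Hadj; auto).
    apply Rmult_integral in Hz. destruct Hz; lra. }
  destruct (rsum_exists_nz n (fun v => lam u v)) as [v [Hv Hnz]]; [lra|].
  assert (Ha : adj u v) by (apply Hadj; auto; specialize (Hpos v Hv); lra).
  specialize (Heq1 v Hv Ha). specialize (Heq2 v Hv Ha).
  assert (Hf : f v = f u).
  { unfold aff in *. destruct (f v) as [x1 y1], (f u) as [x2 y2]. simpl in *.
    assert (E1 : a1 * (x1 - x2) + b1 * (y1 - y2) = 0) by lra.
    assert (E2 : a2 * (x1 - x2) + b2 * (y1 - y2) = 0) by lra.
    assert (E3 : (a1 * b2 - a2 * b1) * (x1 - x2) = 0).
    { replace ((a1 * b2 - a2 * b1) * (x1 - x2)) with (b2 * (a1 * (x1 - x2) + b1 * (y1 - y2)) - b1 * (a2 * (x1 - x2) + b2 * (y1 - y2))) by ring. rewrite E1, E2; ring. }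
    assert (E4 : (a1 * b2 - a2 * b1) * (y1 - y2) = 0).
    { replace ((a1 * b2 - a2 * b1) * (y1 - y2)) with (a1 * (a2 * (x1 - x2) + b2 * (y1 - y2)) - a2 * (a1 * (x1 - x2) + b1 * (y1 - y2))) by ring. rewrite E1, E2; ring. }
    apply Rmult_integral in E3, E4. f_equal; lra. }
  destruct (S_emb _ _ _ _ _ _ HS) as [Hinj _].
  destruct Hu as [Hun _].
  assert (v = u) by (apply Hinj; auto). subst v.
  destruct (S_sg _ _ _ _ _ _ HS) as [_ [_ Hirr]]. apply (Hirr u); auto.
Qed.

Definition Pc (C : list nat) (f : nat -> pt) i := f (nth i C O).
Definition hh s C f i p := s * orient (Pc C f i) (Pc C f (S i mod length C)) p.
Definition inside s C f p := forall i, (i < length C)%nat -> 0 < hh s C f i p.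

Lemma orient_lerp a b p q t : orient a b (lerp p q t) = (1 - t) * orient a b p + t * orient a b q.
Proof. unfold orient, lerp, padd, pscale; simpl; ring. Qed.

Lemma aff_lerp a b c p q t : aff a b c (lerp p q t) = (1 - t) * aff a b c p + t * aff a b c q.
Proof. unfold aff, lerp, padd, pscale; simpl; ring. Qed.

Lemma orient_aff a b p : orient a b p =
  aff (-(snd b - snd a)) (fst b - fst a) ((snd b - snd a) * fst a - (fst b - fst a) * snd a) p.
Proof. unfold orient, aff; ring. Qed.

Lemma k3 n adj C f s lam : setting n adj C f s lam -> (3 <= length C)%nat.
Proof. intros HS; destruct (S_sc _ _ _ _ _ _ HS) as [H _]; auto. Qed.

Lemma succ_lt k i : (i < k)%nat -> (S i mod k < k)%nat.
Proof. intros; apply Nat.mod_upper_bound; lia. Qed.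

Lemma s2 n adj C f s lam : setting n adj C f s lam -> s * s = 1.
Proof. intros HS; destruct (S_s _ _ _ _ _ _ HS) as [-> | ->]; ring. Qed.

Lemma hh_corner n adj C f s lam i j : setting n adj C f s lam ->
  (i < length C)%nat -> (j < length C)%nat -> 0 <= hh s C f i (Pc C f j).
Proof.
  intros HS Hi Hj. unfold hh, Pc.
  destruct (Nat.eq_dec j i) as [->|H1].
  - unfold orient; nra.
  - destruct (Nat.eq_dec j (S i mod length C)) as [->|H2].
    + unfold orient. apply Req_le. ring_simplify. lra.
    + apply Rlt_le, (S_poly _ _ _ _ _ _ HS); auto.
Qed.

Lemma third_idx k i : (3 <= k)%nat -> (i < k)%nat -> exists j, (j < k)%nat /\ j <> i /\ j <> (S i mod k)%nat.
Proof.
  intros Hk Hi. set (m := (S i mod k)%nat).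
  destruct (Nat.eq_dec 0 i), (Nat.eq_dec 0 m), (Nat.eq_dec 1 i), (Nat.eq_dec 1 m);
  first [exists 0%nat; lia | exists 1%nat; lia | exists 2%nat; lia].
Qed.

Lemma edge_nondeg n adj C f s lam i : setting n adj C f s lam -> (i < length C)%nat ->
  (fst (Pc C f (S i mod length C)) - fst (Pc C f i)) * (fst (Pc C f (S i mod length C)) - fst (Pc C f i)) +
  (snd (Pc C f (S i mod length C)) - snd (Pc C f i)) * (snd (Pc C f (S i mod length C)) - snd (Pc C f i)) > 0.
Proof.
  intros HS Hi. destruct (third_idx (length C) i) as [j [Hj [H1 H2]]]; auto. eapply k3; eauto.
  pose proof (S_poly _ _ _ _ _ _ HS i j Hi Hj H1 H2) as Hp.
  unfold Pc. set (a := f (nth i C O)) in *. set (b := f (nth (S i mod length C) C O)) in *.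
  destruct (Req_dec (fst b - fst a) 0) as [E1|E1]; [destruct (Req_dec (snd b - snd a) 0) as [E2|E2]|].
  - exfalso. unfold orient in Hp. rewrite E1, E2 in Hp. lra.
  - pose proof (Rsqr_pos_lt _ E2); pose proof (Rle_0_sqr (fst b - fst a)); unfold Rsqr in *. lra.
  - pose proof (Rsqr_pos_lt _ E1); pose proof (Rle_0_sqr (snd b - snd a)); unfold Rsqr in *. lra.
Qed.

Lemma nth_in_lt n adj C f s lam j : setting n adj C f s lam -> (j < length C)%nat -> (nth j C O < n)%nat.
Proof.
  intros HS Hj. destruct (S_sc _ _ _ _ _ _ HS) as [_ [_ [H _]]]. apply H, nth_In; auto.
Qed.

Lemma min_external n adj C f s lam (a1 b1 c1 a2 b2 c2 : R) : setting n adj C f s lam ->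
  a1 * b2 - a2 * b1 <> 0 ->
  exists j, (j < length C)%nat /\ forall v, (v < n)%nat -> aff a1 b1 c1 (Pc C f j) <= aff a1 b1 c1 (f v).
Proof.
  intros HS Hdet.
  assert (Hn : exists v, (v < n)%nat /\ True).
  { exists (nth 0 C O); split; auto. eapply nth_in_lt; eauto. pose proof (k3 _ _ _ _ _ _ HS); lia. }
  destruct (lexmin (fun _ => True) (fun v => aff a1 b1 c1 (f v)) (fun v => aff a2 b2 c2 (f v)) n Hn)
    as [w [Hw [_ Hmin]]].
  destruct (classic (In w C)) as [Hin|Hin].
  - destruct (In_nth C w O Hin) as [j [Hj Hjw]]. exists j; split; auto.
    intros v Hv. unfold Pc; rewrite Hjw. apply Rnot_lt_le; intro Hl. apply (Hmin v Hv I). left; auto.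
  - exfalso. destruct (nb_lex n adj C f s lam w a1 b1 c1 a2 b2 c2 HS) as [v [Hv [_ Hl]]]; auto.
    + split; auto.
    + apply (Hmin v Hv I Hl).
Qed.

Lemma contain n adj C f s lam v i : setting n adj C f s lam -> (v < n)%nat -> (i < length C)%nat ->
  0 <= hh s C f i (f v).
Proof.
  intros HS Hv Hi. pose proof (edge_nondeg _ _ _ _ _ _ i HS Hi) as Hnd.
  set (a := Pc C f i) in *. set (b := Pc C f (S i mod length C)) in *.
  destruct (min_external n adj C f s lam
     (s * (-(snd b - snd a))) (s * (fst b - fst a)) (s * ((snd b - snd a) * fst a - (fst b - fst a) * snd a))
     (fst b - fst a) (snd b - snd a) 0 HS) as [j [Hj Hm]].
  - pose proof (s2 _ _ _ _ _ _ HS). intro E.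
    assert (s * (s * (- (snd b - snd a)) * (snd b - snd a) - (fst b - fst a) * (s * (fst b - fst a))) = 0) by (rewrite E; ring).
    assert (s * (s * (- (snd b - snd a)) * (snd b - snd a) - (fst b - fst a) * (s * (fst b - fst a))) = - (s*s) * ((fst b - fst a) * (fst b - fst a) + (snd b - snd a) * (snd b - snd a))) by ring.
    rewrite H1, H in H0. lra.
  - specialize (Hm v Hv). pose proof (hh_corner _ _ _ _ _ _ i j HS Hi Hj).
    unfold hh in *. fold a b in H.
    assert (E : forall p, aff (s * (-(snd b - snd a))) (s * (fst b - fst a)) (s * ((snd b - snd a) * fst a - (fst b - fst a) * snd a)) p = s * orient a b p) by (intros; unfold aff, orient; ring).
    rewrite !E in Hm. fold a b. lra.
Qed.

Lemma closed_seg_lerp a b x : closed_seg a b x -> exists t, 0 <= t <= 1 /\ x = lerp a b t.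
Proof. auto. Qed.

Lemma D_nonneg n adj C f s lam x i : setting n adj C f s lam -> drawing n adj f x ->
  (i < length C)%nat -> 0 <= hh s C f i x.
Proof.
  intros HS [[v [Hv ->]] | [u [v [Ha [t [Ht ->]]]]]] Hi.
  - eapply contain; eauto.
  - destruct (S_sg _ _ _ _ _ _ HS) as [Hb _]. destruct (Hb u v Ha).
    pose proof (contain _ _ _ _ _ _ u i HS H Hi). pose proof (contain _ _ _ _ _ _ v i HS H0 Hi).
    unfold hh in *. rewrite orient_lerp. nra.
Qed.

Lemma Rabs_le_b x M : Rabs x <= M -> -M <= x <= M.
Proof. unfold Rabs; destruct (Rcase_abs x); lra. Qed.

Lemma path_lin (D : pt -> Prop) (x0 : pt) (u1 u2 : R) :
  (forall t, 0 <= t <= 1 -> ~ D (fst x0 + t * u1, snd x0 + t * u2)) ->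
  path_in_compl D x0 (fst x0 + u1, snd x0 + u2).
Proof.
  intros H. exists (fun t => (fst x0 + t * u1, snd x0 + t * u2)). simpl.
  split; [reg|]. split; [reg|]. split.
  - destruct x0; simpl; f_equal; ring.
  - split; [f_equal; ring|]. auto.
Qed.

Lemma bounded_inside n adj C f s lam x0 F : setting n adj C f s lam ->
  ~ drawing n adj f x0 ->
  (forall x, F x <-> path_in_compl (drawing n adj f) x0 x) ->
  bounded_region F -> inside s C f x0.
Proof.
  intros HS Hx0 HF [M HM] i Hi. apply Rnot_le_lt; intro Hle.
  pose proof (edge_nondeg _ _ _ _ _ _ i HS Hi) as Hnd.
  pose proof (s2 _ _ _ _ _ _ HS) as Hs2.
  unfold hh in *.
  set (a := Pc C f i) in *. set (b := Pc C f (S i mod length C)) in *.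
  set (d1 := fst b - fst a) in *. set (d2 := snd b - snd a) in *.
  set (N := d1 * d1 + d2 * d2) in *.
  assert (Hval : forall tau, s * orient a b (fst x0 + tau * (s * d2), snd x0 + tau * (- (s * d1))) =
                             s * orient a b x0 - (s * s) * tau * N).
  { intros. unfold orient, N, d1, d2. simpl. ring. }
  assert (Hnot : forall tau, 0 <= tau -> ~ drawing n adj f (fst x0 + tau * (s * d2), snd x0 + tau * (- (s * d1)))).
  { intros tau Ht HD. destruct (Req_dec tau 0) as [->|Hne].
    - apply Hx0. destruct x0 as [p q]; simpl in HD. replace (p + 0 * (s * d2)) with p in HD by ring.
      replace (q + 0 * - (s * d1)) with q in HD by ring. auto.
    - pose proof (D_nonneg _ _ _ _ _ _ _ i HS HD Hi) as Hn. unfold hh in Hn. fold a b in Hn.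
      rewrite Hval, Hs2 in Hn. assert (0 < tau * N) by (apply Rmult_lt_0_compat; lra). lra. }
  assert (F0 : F x0).
  { apply HF. pose proof (path_lin (drawing n adj f) x0 0 0) as Hp.
    destruct x0 as [p q]; simpl in *. replace (p + 0) with p in Hp by ring. replace (q + 0) with q in Hp by ring.
    apply Hp. intros t _. replace (p + t * 0) with p by ring. replace (q + t * 0) with q by ring. auto. }
  set (R0 := 1 + (8 * M * M + 1) / N).
  assert (HR0 : 0 <= R0 /\ R0 * R0 * N > 8 * M * M).
  { assert (0 <= (8 * M * M + 1) / N) by (unfold Rdiv; apply Rmult_le_pos; [nra| apply Rlt_le, Rinv_0_lt_compat; lra]).
    split; [unfold R0; lra|].
    assert (R0 * N = N + (8 * M * M + 1)) by (unfold R0; field; lra).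
    assert (R0 * R0 * N >= R0 * N) by nra. lra. }
  assert (F1 : F (fst x0 + R0 * (s * d2), snd x0 + R0 * - (s * d1))).
  { apply HF. apply path_lin. intros t Ht.
    replace (t * (R0 * (s * d2))) with ((t * R0) * (s * d2)) by ring.
    replace (t * (R0 * - (s * d1))) with ((t * R0) * - (s * d1)) by ring.
    apply Hnot. nra. }
  destruct (HM _ F0) as [A1 A2]. destruct (HM _ F1) as [B1 B2]. simpl in B1, B2.
  apply Rabs_le_b in A1, A2, B1, B2.
  assert (E1 : (R0 * (s * d2)) * (R0 * (s * d2)) <= 4 * M * M) by nra.
  assert (E2 : (R0 * - (s * d1)) * (R0 * - (s * d1)) <= 4 * M * M) by nra.
  assert ((R0 * (s * d2)) * (R0 * (s * d2)) + (R0 * - (s * d1)) * (R0 * - (s * d1)) = (s * s) * (R0 * R0 * N)) by (unfold N; ring).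
  rewrite Hs2 in H. lra.
Qed.

Lemma succ_cases k i : (i < k)%nat -> ((S i < k)%nat /\ (S i mod k = S i)%nat) \/ (S i = k /\ (S i mod k = 0)%nat).
Proof.
  intros H. destruct (Nat.eq_dec (S i) k) as [E|E].
  - right; split; auto. rewrite E. apply Nat.mod_same; lia.
  - left; split; [lia|]. apply Nat.mod_small; lia.
Qed.

Lemma idx_facts k i : (3 <= k)%nat -> (i < k)%nat ->
  (S i mod k < k)%nat /\ (S i mod k <> i)%nat /\ (S (S i mod k) mod k <> i)%nat /\
  exists p, (p < k)%nat /\ (S p mod k = i)%nat /\ p <> i /\ (S i mod k <> p)%nat.
Proof.
  intros Hk Hi.
  destruct (succ_cases k i Hi) as [[H1 E1]|[H1 E1]]; rewrite E1.
  - destruct (succ_cases k (S i) H1) as [[H2 E2]|[H2 E2]]; rewrite E2.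
    + split; [lia|]. split; [lia|]. split; [lia|].
      destruct i as [|i'].
      * exists (k - 1)%nat. destruct (succ_cases k (k-1)) as [[A B]|[A B]]; [lia|lia|].
        rewrite B. lia.
      * exists i'. destruct (succ_cases k i') as [[A B]|[A B]]; [lia| |lia]. rewrite B. lia.
    + split; [lia|]. split; [lia|]. split; [lia|].
      destruct i as [|i'].
      * lia.
      * exists i'. destruct (succ_cases k i') as [[A B]|[A B]]; [lia| |lia]. rewrite B. lia.
  - destruct (succ_cases k 0) as [[H2 E2]|[H2 E2]]; [lia| |lia]. rewrite E2.
    split; [lia|]. split; [lia|]. split; [lia|].
    destruct i as [|i']; [lia|].
    exists i'. destruct (succ_cases k i') as [[A B]|[A B]]; [lia| |lia]. rewrite B. lia.
Qed.

Lemma cyc_adj n adj C f s lam i : setting n adj C f s lam -> (i < length C)%nat ->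
  adj (nth i C O) (nth (S i mod length C) C O).
Proof. intros HS Hi. destruct (S_sc _ _ _ _ _ _ HS) as [_ [_ [_ H]]]. auto. Qed.

Lemma adj_sym n adj C f s lam u v : setting n adj C f s lam -> adj u v -> adj v u.
Proof. intros HS. destruct (S_sg _ _ _ _ _ _ HS) as [_ [H _]]. auto. Qed.

Definition cr (u1 u2 w1 w2 : R) := u1 * w2 - u2 * w1.

Lemma corner n adj C f s lam j x (a b c : R) : setting n adj C f s lam -> (j < length C)%nat ->
  inside s C f x -> aff a b c x < aff a b c (Pc C f j) ->
  exists j', (j' < length C)%nat /\ adj (nth j C O) (nth j' C O) /\ aff a b c (Pc C f j') < aff a b c (Pc C f j).
Proof.
  intros HS Hj Hin Hlt. pose proof (k3 _ _ _ _ _ _ HS) as Hk.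
  destruct (idx_facts _ _ Hk Hj) as [Hj1 [Hn1 [_ [p [Hp [Hsp [Hpj Hj1p]]]]]]].
  set (j1 := (S j mod length C)%nat) in *.
  pose proof (Hin p Hp) as Hx1. pose proof (Hin j Hj) as Hx2.
  pose proof (S_poly _ _ _ _ _ _ HS p j1 Hp Hj1 Hj1p) as Hb.
  rewrite Hsp in Hb. specialize (Hb Hn1).
  unfold hh in Hx1, Hx2. rewrite Hsp in Hx1. fold j1 in Hx2.
  destruct (classic (aff a b c (Pc C f p) < aff a b c (Pc C f j))) as [Hl|Hl].
  - exists p; split; auto. split; auto. eapply adj_sym; eauto.
    pose proof (cyc_adj _ _ _ _ _ _ p HS Hp). rewrite Hsp in H. auto.
  - destruct (classic (aff a b c (Pc C f j1) < aff a b c (Pc C f j))) as [Hl2|Hl2].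
    + exists j1; split; auto. split; auto. apply (cyc_adj _ _ _ _ _ _ j HS Hj).
    + exfalso. apply Rnot_lt_le in Hl, Hl2.
      unfold Pc in *. fold (Pc C f p) (Pc C f j) (Pc C f j1) in *.
      destruct (Pc C f p) as [a1 a2]. destruct (Pc C f j) as [v1 v2]. destruct (Pc C f j1) as [b1 b2].
      destruct x as [x1 x2]. unfold aff, orient in *; simpl in *.
      set (A1 := a1 - v1) in *. set (A2 := a2 - v2). set (B1 := b1 - v1). set (B2 := b2 - v2).
      set (X1 := x1 - v1). set (X2 := x2 - v2).
      assert (I1 : s * cr A1 A2 X1 X2 < 0) by (unfold cr, A1, A2, X1, X2; nra).
      assert (I2 : s * cr B1 B2 X1 X2 > 0) by (unfold cr, B1, B2, X1, X2; nra).
      assert (I3 : s * cr A1 A2 B1 B2 < 0) by (unfold cr, B1, B2, A1, A2; nra).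
      assert (LA : 0 <= a * A1 + b * A2) by (unfold A1, A2; lra).
      assert (LB : 0 <= a * B1 + b * B2) by (unfold B1, B2; lra).
      assert (LX : a * X1 + b * X2 < 0) by (unfold X1, X2; lra).
      assert (ID : (s * cr A1 A2 B1 B2) * (a * X1 + b * X2) =
                   (- (s * cr B1 B2 X1 X2)) * (a * A1 + b * A2) + (s * cr A1 A2 X1 X2) * (a * B1 + b * B2))
        by (unfold cr; ring).
      assert (0 < (s * cr A1 A2 B1 B2) * (a * X1 + b * X2)) by nra.
      assert ((- (s * cr B1 B2 X1 X2)) * (a * A1 + b * A2) <= 0) by nra.
      assert ((s * cr A1 A2 X1 X2) * (a * B1 + b * B2) <= 0) by nra.
      lra.
Qed.

Lemma boundary n adj C f s lam i p : setting n adj C f s lam -> (i < length C)%nat ->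
  hh s C f i p = 0 -> (forall j, (j < length C)%nat -> 0 <= hh s C f j p) ->
  closed_seg (Pc C f i) (Pc C f (S i mod length C)) p.
Proof.
  intros HS Hi H0 Hall. pose proof (k3 _ _ _ _ _ _ HS) as Hk.
  destruct (idx_facts _ _ Hk Hi) as [Hi1 [Hn1 [Hn2 [p0 [Hp0 [Hsp [Hpi Hi1p]]]]]]].
  set (i1 := (S i mod length C)%nat) in *.
  set (i2 := (S i1 mod length C)%nat) in *.
  pose proof (Hall i1 Hi1) as G1. pose proof (Hall p0 Hp0) as G2.
  pose proof (S_poly _ _ _ _ _ _ HS i1 i Hi1 Hi (not_eq_sym Hn1) (not_eq_sym Hn2)) as K1.
  pose proof (S_poly _ _ _ _ _ _ HS p0 i1 Hp0 Hi1 Hi1p) as K2.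
  rewrite Hsp in K2. specialize (K2 Hn1).
  pose proof (edge_nondeg _ _ _ _ _ _ i HS Hi) as Hnd.
  unfold hh in H0, G1, G2. fold i1 i2 in G1, K1. rewrite Hsp in G2. fold i1 in Hnd, H0.
  fold (Pc C f i) (Pc C f i1) (Pc C f i2) (Pc C f p0) in *.
  destruct (Pc C f i) as [a1 a2]. destruct (Pc C f i1) as [b1 b2].
  destruct (Pc C f i2) as [e1 e2]. destruct (Pc C f p0) as [c1 c2]. destruct p as [p1 p2].
  unfold orient in *; simpl in *.
  set (d1 := b1 - a1) in *. set (d2 := b2 - a2) in *.
  set (N := d1 * d1 + d2 * d2) in *.
  set (t := ((p1 - a1) * d1 + (p2 - a2) * d2) / N).
  assert (Hor : d1 * (p2 - a2) - d2 * (p1 - a1) = 0).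
  { apply Rmult_integral in H0. destruct H0 as [H0|H0]; auto. destruct (S_s _ _ _ _ _ _ HS); lra. }
  assert (HN : d1 * d1 + d2 * d2 <> 0) by (fold N; lra).
  assert (E1 : p1 = a1 + t * d1).
  { assert (a1 + t * d1 - p1 = d2 * (d1 * (p2 - a2) - d2 * (p1 - a1)) / (d1 * d1 + d2 * d2)).
    { unfold t, N. field. auto. }
    rewrite Hor in H. lra. }
  assert (E2 : p2 = a2 + t * d2).
  { assert (a2 + t * d2 - p2 = - d1 * (d1 * (p2 - a2) - d2 * (p1 - a1)) / (d1 * d1 + d2 * d2)).
    { unfold t, N. field. auto. }
    rewrite Hor in H. lra. }
  clearbody t.
  assert (Q1e : s * ((e1 - b1) * (p2 - b2) - (e2 - b2) * (p1 - b1)) = (t - 1) * (s * ((e1 - b1) * d2 - (e2 - b2) * d1))).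
  { rewrite E1, E2. unfold d1, d2. ring. }
  assert (Q1k : s * ((e1 - b1) * (a2 - b2) - (e2 - b2) * (a1 - b1)) = - (s * ((e1 - b1) * d2 - (e2 - b2) * d1))).
  { unfold d1, d2. ring. }
  assert (Q2e : s * ((a1 - c1) * (p2 - c2) - (a2 - c2) * (p1 - c1)) = t * (s * ((a1 - c1) * d2 - (a2 - c2) * d1))).
  { rewrite E1, E2. unfold d1, d2. ring. }
  assert (Q2k : s * ((a1 - c1) * (b2 - c2) - (a2 - c2) * (b1 - c1)) = s * ((a1 - c1) * d2 - (a2 - c2) * d1)).
  { unfold d1, d2. ring. }
  rewrite Q1e in G1. rewrite Q1k in K1. rewrite Q2e in G2. rewrite Q2k in K2.
  set (q1 := s * ((e1 - b1) * d2 - (e2 - b2) * d1)) in *.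
  set (q2 := s * ((a1 - c1) * d2 - (a2 - c2) * d1)) in *.
  assert (t <= 1).
  { apply Rnot_lt_le; intro Ht. assert (0 < (t - 1) * (- q1)) by (apply Rmult_lt_0_compat; lra). lra. }
  assert (0 <= t).
  { apply Rnot_lt_le; intro Ht. assert (0 < (- t) * q2) by (apply Rmult_lt_0_compat; lra). lra. }
  exists t. split; [lra|]. unfold lerp, padd, pscale; simpl. rewrite E1, E2. unfold d1, d2. f_equal; ring.
Qed.

Lemma propagate n adj C f s lam x z : setting n adj C f s lam -> inside s C f x ->
  (forall q, closed_seg x z q -> ~ drawing n adj f q) -> inside s C f z.
Proof.
  intros HS Hx Hfree. apply NNPP; intro Hno.
  assert (Hex : exists i, (i < length C)%nat /\ hh s C f i z <= 0).
  { apply NNPP; intro H. apply Hno. intros i Hi. apply Rnot_le_lt. intro Hle. apply H; eauto. }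
  set (tau := fun i => hh s C f i x / (hh s C f i x - hh s C f i z)).
  destruct (lexmin (fun i => hh s C f i z <= 0) tau (fun _ => 0) (length C) Hex) as [m [Hm [Qm Hmin]]].
  pose proof (Hx m Hm) as Xm.
  assert (Tm : 0 < tau m <= 1).
  { unfold tau. split.
    - unfold Rdiv; apply Rmult_lt_0_compat; [lra|apply Rinv_0_lt_compat; lra].
    - apply Rmult_le_reg_r with (hh s C f m x - hh s C f m z); [lra|].
      unfold Rdiv. rewrite Rmult_assoc, Rinv_l; lra. }
  set (q := lerp x z (tau m)).
  assert (Hq : forall j, (j < length C)%nat -> hh s C f j q = hh s C f j x - tau m * (hh s C f j x - hh s C f j z)).
  { intros j Hj. unfold q, hh. rewrite orient_lerp. ring. }
  assert (Hall : forall j, (j < length C)%nat -> 0 <= hh s C f j q).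
  { intros j Hj. rewrite (Hq j Hj). pose proof (Hx j Hj) as Xj.
    destruct (Rle_dec (hh s C f j z) 0) as [Zj|Zj].
    - assert (Tj : tau m <= tau j).
      { apply Rnot_lt_le; intro Hl. apply (Hmin j Hj Zj). left; auto. }
      unfold tau in Tj.
      assert (tau m * (hh s C f j x - hh s C f j z) <= hh s C f j x).
      { apply Rle_trans with (hh s C f j x / (hh s C f j x - hh s C f j z) * (hh s C f j x - hh s C f j z)).
        - apply Rmult_le_compat_r; [lra|auto].
        - unfold Rdiv. rewrite Rmult_assoc, Rinv_l; lra. }
      lra.
    - replace (hh s C f j x - tau m * (hh s C f j x - hh s C f j z)) with
        ((1 - tau m) * hh s C f j x + tau m * hh s C f j z) by ring.
      apply Rplus_le_le_0_compat; apply Rmult_le_pos; lra. }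
  assert (H0 : hh s C f m q = 0).
  { rewrite (Hq m Hm). unfold tau. field. lra. }
  pose proof (boundary _ _ _ _ _ _ m q HS Hm H0 Hall) as Hb.
  apply (Hfree q).
  - exists (tau m). split; [lra|reflexivity].
  - right. exists (nth m C O), (nth (S m mod length C) C O). split; auto.
    eapply cyc_adj; eauto.
Qed.

Definition free (D : pt -> Prop) x z := forall p, closed_seg x z p -> ~ D p.

Lemma exit_real A0 B0 A1 B1 : 0 <= A0 -> 0 <= B0 -> A0 + B0 <= 1 -> A1 + B1 <= 1 -> (A1 < 0 \/ B1 < 0) ->
  exists t, 0 <= t <= 1 /\ 0 <= (1 - t) * A0 + t * A1 /\ 0 <= (1 - t) * B0 + t * B1 /\
    ((1 - t) * A0 + t * A1) + ((1 - t) * B0 + t * B1) <= 1 /\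
    ((1 - t) * A0 + t * A1 = 0 \/ (1 - t) * B0 + t * B1 = 0).
Proof.
  intros H1 H2 H3 H4 H5.
  assert (Hsum : forall t, 0 <= t <= 1 -> ((1 - t) * A0 + t * A1) + ((1 - t) * B0 + t * B1) <= 1).
  { intros t Ht. replace (((1 - t) * A0 + t * A1) + ((1 - t) * B0 + t * B1)) with
      ((1 - t) * (A0 + B0) + t * (A1 + B1)) by ring.
    assert ((1 - t) * (A0 + B0) <= (1 - t) * 1) by (apply Rmult_le_compat_l; lra).
    assert (t * (A1 + B1) <= t * 1) by (apply Rmult_le_compat_l; lra). lra. }
  assert (Hgen : forall X0 X1 Y0 Y1, 0 <= X0 -> 0 <= Y0 -> X1 < 0 ->
     (0 <= Y1 \/ (Y1 < 0 /\ X0 / (X0 - X1) <= Y0 / (Y0 - Y1))) ->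
     let t := X0 / (X0 - X1) in 0 <= t <= 1 /\ (1 - t) * X0 + t * X1 = 0 /\ 0 <= (1 - t) * Y0 + t * Y1).
  { intros X0 X1 Y0 Y1 HX0 HY0 HX1 HY t.
    assert (Ht : 0 <= t <= 1).
    { unfold t. split.
      - unfold Rdiv; apply Rmult_le_pos; [lra|apply Rlt_le, Rinv_0_lt_compat; lra].
      - apply Rmult_le_reg_r with (X0 - X1); [lra|]. unfold Rdiv. rewrite Rmult_assoc, Rinv_l; lra. }
    split; auto. split.
    - unfold t. field. lra.
    - destruct HY as [HY|[HY1 HY2]].
      + apply Rplus_le_le_0_compat; apply Rmult_le_pos; lra.
      + replace ((1 - t) * Y0 + t * Y1) with (Y0 - t * (Y0 - Y1)) by ring.
        assert (t * (Y0 - Y1) <= Y0 / (Y0 - Y1) * (Y0 - Y1)) by (apply Rmult_le_compat_r; unfold t; lra).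
        assert (Y0 / (Y0 - Y1) * (Y0 - Y1) = Y0) by (field; lra). lra. }
  destruct (Rlt_dec A1 0) as [HA|HA]; destruct (Rlt_dec B1 0) as [HB|HB].
  - destruct (Rle_dec (A0 / (A0 - A1)) (B0 / (B0 - B1))) as [Hle|Hle].
    + destruct (Hgen A0 A1 B0 B1 H1 H2 HA (or_intror (conj HB Hle))) as [Ht [E1 E2]].
      eexists; split; [exact Ht|]. split; [lra|]. split; [exact E2|]. split; [apply Hsum; auto|]. left; auto.
    + destruct (Hgen B0 B1 A0 A1 H2 H1 HB (or_intror (conj HA (Rlt_le _ _ (Rnot_le_lt _ _ Hle))))) as [Ht [E1 E2]].
      eexists; split; [exact Ht|]. split; [exact E2|]. split; [lra|]. split; [apply Hsum; auto|]. right; auto.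
  - destruct (Hgen A0 A1 B0 B1 H1 H2 HA (or_introl (Rnot_lt_le _ _ HB))) as [Ht [E1 E2]].
    eexists; split; [exact Ht|]. split; [lra|]. split; [exact E2|]. split; [apply Hsum; auto|]. left; auto.
  - destruct (Hgen B0 B1 A0 A1 H2 H1 HB (or_introl (Rnot_lt_le _ _ HA))) as [Ht [E1 E2]].
    eexists; split; [exact Ht|]. split; [exact E2|]. split; [lra|]. split; [apply Hsum; auto|]. right; auto.
  - exfalso; destruct H5; auto.
Qed.

Lemma lerp_sub1 a b t0 t : lerp (lerp a b t0) b t = lerp a b (t0 + t - t0 * t).
Proof. unfold lerp, padd, pscale; simpl; f_equal; ring. Qed.
Lemma lerp_sub2 a b t0 t : lerp (lerp a b t0) a t = lerp a b ((1 - t) * t0).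
Proof. unfold lerp, padd, pscale; simpl; f_equal; ring. Qed.

Lemma seg_sub a b q y : closed_seg a b q -> (exists t, 0 <= t <= 1 /\ (y = lerp q b t \/ y = lerp q a t)) ->
  closed_seg a b y.
Proof.
  intros [t0 [Ht0 ->]] [t [Ht [-> | ->]]].
  - rewrite lerp_sub1. eexists; split; [|reflexivity]. split; nra.
  - rewrite lerp_sub2. eexists; split; [|reflexivity]. split; nra.
Qed.

Lemma A_nd n adj C f s lam x z1 z2 : setting n adj C f s lam -> inside s C f x ->
  free (drawing n adj f) x z1 -> free (drawing n adj f) x z2 ->
  let u1 := fst z1 - fst x in let u2 := snd z1 - snd x in
  let w1 := fst z2 - fst x in let w2 := snd z2 - snd x in
  let D0 := u1 * w2 - u2 * w1 in
  D0 <> 0 ->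
  let al := aff (w2 / D0) (- w1 / D0) ((snd x * w1 - fst x * w2) / D0) in
  let be := aff (- u2 / D0) (u1 / D0) ((u2 * fst x - u1 * snd x) / D0) in
  forall p, 0 <= al p -> 0 <= be p -> al p + be p <= 1 -> ~ drawing n adj f p.
Proof.
  intros HS Hin F1 F2 u1 u2 w1 w2 D0 HD al be.
  set (Dr := drawing n adj f).
  set (inT := fun p => 0 <= al p /\ 0 <= be p /\ al p + be p <= 1).
  assert (Rec1 : forall p, fst p = fst x + al p * u1 + be p * w1).
  { intros p. unfold al, be, aff, D0 in *. field. auto. }
  assert (Rec2 : forall p, snd p = snd x + al p * u2 + be p * w2).
  { intros p. unfold al, be, aff, D0 in *. field. auto. }
  assert (Alx : al x = 0) by (unfold al, aff; field; auto).
  assert (Bex : be x = 0) by (unfold be, aff; field; auto).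
  assert (Side : forall y, inT y -> (al y = 0 \/ be y = 0) -> ~ Dr y).
  { intros y [Ha [Hb Hs]] [E|E].
    - apply F2. exists (be y). split; [lra|]. unfold lerp, padd, pscale.
      apply injective_projections; [rewrite (Rec1 y) | rewrite (Rec2 y)]; rewrite E; unfold w1, w2; simpl; ring.
    - apply F1. exists (al y). split; [lra|]. unfold lerp, padd, pscale.
      apply injective_projections; [rewrite (Rec1 y) | rewrite (Rec2 y)]; rewrite E; unfold u1, u2; simpl; ring. }
  assert (Exit : forall a b q r, closed_seg a b q -> (Dr = Dr) ->
     (forall y, closed_seg a b y -> Dr y) -> inT q -> al r + be r <= 1 -> (al r < 0 \/ be r < 0) ->
     (r = a \/ r = b) -> False).
  { intros a b q r Hq _ HDD Hq' Hr Hneg Hrab.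
    destruct Hq' as [Hqa [Hqb Hqs]].
    destruct (exit_real (al q) (be q) (al r) (be r) Hqa Hqb Hqs Hr Hneg) as [t [Ht [Ya [Yb [Ys Y0]]]]].
    set (y := lerp q r t).
    assert (Hy1 : al y = (1 - t) * al q + t * al r) by (unfold y, al; apply aff_lerp).
    assert (Hy2 : be y = (1 - t) * be q + t * be r) by (unfold y, be; apply aff_lerp).
    apply (Side y).
    - unfold inT; rewrite Hy1, Hy2; lra.
    - rewrite Hy1, Hy2; auto.
    - apply HDD. apply seg_sub with q; auto. exists t; split; auto.
      destruct Hrab as [-> | ->]; [right|left]; reflexivity. }
  assert (EdgeD : forall u v, adj u v -> forall y, closed_seg (f u) (f v) y -> Dr y).
  { intros u v Ha y Hy. right. exists u, v. auto. }
  assert (Vex : forall q, Dr q -> inT q -> exists v, (v < n)%nat /\ inT (f v)).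
  { intros q [[v [Hv ->]] | [u [v [Ha Hq]]]] HqT.
    - exists v; auto.
    - destruct (S_sg _ _ _ _ _ _ HS) as [Hb _]. destruct (Hb u v Ha) as [Hu Hv].
      apply NNPP; intro Hno.
      assert (NU : ~ inT (f u)) by (intro; apply Hno; exists u; auto).
      assert (NV : ~ inT (f v)) by (intro; apply Hno; exists v; auto).
      destruct Hq as [t0 [Ht0 Eq]].
      assert (Lq : al q + be q = (1 - t0) * (al (f u) + be (f u)) + t0 * (al (f v) + be (f v))).
      { rewrite Eq. unfold al, be. rewrite !aff_lerp. ring. }
      destruct HqT as [Hqa [Hqb Hqs]].
      destruct (Rle_dec (al (f v) + be (f v)) 1) as [Lv|Lv].
      + apply (Exit (f u) (f v) q (f v)); auto.
        * exists t0; auto.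
        * apply EdgeD; auto.
        * split; auto.
        * apply NNPP; intro H. apply NV. unfold inT. repeat split; lra.
      + destruct (Rle_dec (al (f u) + be (f u)) 1) as [Lu|Lu].
        * apply (Exit (f u) (f v) q (f u)); auto.
          -- exists t0; auto.
          -- apply EdgeD; auto.
          -- split; auto.
          -- apply NNPP; intro H. apply NU. unfold inT. repeat split; lra.
        * assert ((1 - t0) * (al (f u) + be (f u)) + t0 * (al (f v) + be (f v)) > 1).
          { destruct (Req_dec t0 1) as [->|Hne].
            - lra.
            - assert ((1 - t0) * (al (f u) + be (f u)) > (1 - t0) * 1) by (apply Rmult_lt_compat_l; lra).
              assert (t0 * (al (f v) + be (f v)) >= t0 * 1) by (apply Rle_ge, Rmult_le_compat_l; lra).
              lra. }
          lra. }
  intros p Hpa Hpb Hps HDp.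
  destruct (Vex p HDp (conj Hpa (conj Hpb Hps))) as [v0 [Hv0 Tv0]].
  destruct (lexmin (fun v => inT (f v)) (fun v => al (f v) + be (f v)) (fun v => al (f v)) n
              (ex_intro _ v0 (conj Hv0 Tv0))) as [w [Hw [Tw Hmin]]].
  assert (HDw : Dr (f w)) by (left; exists w; auto).
  assert (Lw : 0 < al (f w) + be (f w)).
  { destruct Tw as [Ta [Tb Ts]].
    destruct (Req_dec (al (f w)) 0) as [E|E]; [exfalso; apply (Side (f w)); auto; split; auto|].
    lra. }
  assert (Nb : exists v, (v < n)%nat /\ adj w v /\
             lexlt (al (f v) + be (f v)) (al (f v)) (al (f w) + be (f w)) (al (f w))).
  { destruct (classic (In w C)) as [Hc|Hc].
    - destruct (In_nth C w O Hc) as [j [Hj Hjw]].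
      assert (HL : forall q, aff (w2 / D0 + - u2 / D0) (- w1 / D0 + u1 / D0)
                   ((snd x * w1 - fst x * w2) / D0 + (u2 * fst x - u1 * snd x) / D0) q = al q + be q)
          by (intros; unfold al, be, aff; ring).
      destruct (corner n adj C f s lam j x (w2 / D0 + - u2 / D0) (- w1 / D0 + u1 / D0)
                  ((snd x * w1 - fst x * w2) / D0 + (u2 * fst x - u1 * snd x) / D0) HS Hj Hin) as [j' [Hj' [Ha Hlt]]].
      + rewrite !HL, Alx, Bex. unfold Pc. rewrite Hjw. lra.
      + exists (nth j' C O). split; [eapply nth_in_lt; eauto|]. split; [rewrite <- Hjw; auto|].
        left. rewrite !HL in Hlt. unfold Pc in Hlt. rewrite Hjw in Hlt. auto.
    - destruct (nb_lex n adj C f s lam w (w2 / D0 + - u2 / D0) (- w1 / D0 + u1 / D0)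
                  ((snd x * w1 - fst x * w2) / D0 + (u2 * fst x - u1 * snd x) / D0)
                  (w2 / D0) (- w1 / D0) ((snd x * w1 - fst x * w2) / D0) HS) as [v [Hv [Ha Hl]]].
      + split; auto.
      + intro E. apply HD.
        assert (E' : (w2 / D0 + - u2 / D0) * (- w1 / D0) - w2 / D0 * (- w1 / D0 + u1 / D0) = - D0 / (D0 * D0))
          by (unfold D0; field; auto).
        rewrite E' in E. assert (- D0 / (D0 * D0) * (D0 * D0) = 0) by (rewrite E; ring).
        replace (- D0 / (D0 * D0) * (D0 * D0)) with (- D0) in H by (field; auto). lra.
      + exists v. split; auto. split; auto.
        assert (HL : forall q, aff (w2 / D0 + - u2 / D0) (- w1 / D0 + u1 / D0)
                   ((snd x * w1 - fst x * w2) / D0 + (u2 * fst x - u1 * snd x) / D0) q = al q + be q)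
          by (intros; unfold al, be, aff; ring).
        rewrite !HL in Hl. auto. }
  destruct Nb as [v [Hv [Ha Hl]]].
  destruct (classic (inT (f v))) as [Tv|Tv].
  - apply (Hmin v Hv Tv Hl).
  - destruct Tw as [Ta [Tb Ts]].
    apply (Exit (f w) (f v) (f w) (f v)); auto.
    + exists 0. split; [lra|]. unfold lerp, padd, pscale. destruct (f w); simpl; f_equal; ring.
    + apply EdgeD; auto.
    + split; auto.
    + unfold lexlt in Hl; lra.
    + apply NNPP; intro H. apply Tv. unfold inT. unfold lexlt in Hl. repeat split; lra.
Qed.

Lemma lmul_le1 l X : 0 <= l <= 1 -> X <= 1 -> l * X <= 1.
Proof. intros. destruct (Rle_dec 0 X). - assert (l * X <= 1 * X) by (apply Rmult_le_compat_r; lra). lra.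
  - assert (l * X <= 0). { assert (0 <= l * (- X)) by (apply Rmult_le_pos; lra). lra. } lra. Qed.

Lemma collin_real u1 u2 w1 w2 l t : u1 * w2 - u2 * w1 = 0 -> 0 <= l <= 1 -> 0 <= t <= 1 ->
  exists m, 0 <= m <= 1 /\
   ((l * ((1 - t) * u1 + t * w1) = m * u1 /\ l * ((1 - t) * u2 + t * w2) = m * u2) \/
    (l * ((1 - t) * u1 + t * w1) = m * w1 /\ l * ((1 - t) * u2 + t * w2) = m * w2)).
Proof.
  intros H Hl Ht.
  destruct (Req_dec u1 0) as [E1|E1]; [destruct (Req_dec u2 0) as [E2|E2]|].
  - exists (l * t). split; [split; nra|]. right. rewrite E1, E2. split; ring.
  - set (N := u1 * u1 + u2 * u2).
    assert (HN : N > 0) by (unfold N; pose proof (Rsqr_pos_lt _ E2); pose proof (Rle_0_sqr u1); unfold Rsqr in *; lra).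
    set (c := (u1 * w1 + u2 * w2) / N).
    assert (HN' : u1 * u1 + u2 * u2 <> 0) by (fold N; lra).
    assert (Hw1 : w1 = c * u1).
    { assert (c * u1 - w1 = u2 * (u1 * w2 - u2 * w1) / (u1 * u1 + u2 * u2)) by (unfold c, N; field; auto).
      rewrite H in H0. unfold Rdiv in H0. rewrite Rmult_0_r, Rmult_0_l in H0. lra. }
    assert (Hw2 : w2 = c * u2).
    { assert (c * u2 - w2 = - u1 * (u1 * w2 - u2 * w1) / (u1 * u1 + u2 * u2)) by (unfold c, N; field; auto).
      rewrite H in H0. unfold Rdiv in H0. rewrite Rmult_0_r, Rmult_0_l in H0. lra. }
    clearbody c. subst w1 w2.
    set (m0 := l * ((1 - t) + t * c)).
    destruct (Rle_dec 0 m0); [destruct (Rle_dec m0 1)|].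
    + exists m0; split; [lra|]. left. unfold m0; split; ring.
    + assert (Hc : c > 1).
      { apply Rnot_le_lt; intro Hc. assert (X1 : t * c <= t * 1) by (apply Rmult_le_compat_l; lra).
        assert (X2 : l * ((1 - t) + t * c) <= 1) by (apply lmul_le1; lra). unfold m0 in *; lra. }
      exists (m0 / c). split.
      * split; [apply Rmult_le_pos; [lra|apply Rlt_le, Rinv_0_lt_compat; lra]|].
        apply Rmult_le_reg_r with c; [lra|]. unfold Rdiv; rewrite Rmult_assoc, Rinv_l; [|lra].
        assert (Y1 : 0 <= (1 - t) * (c - 1)) by (apply Rmult_le_pos; lra).
        assert (Y2 : t * 1 <= t * c) by (apply Rmult_le_compat_l; lra).
        assert (Y3 : l * ((1 - t) + t * c) <= 1 * ((1 - t) + t * c)) by (apply Rmult_le_compat_r; lra).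
        unfold m0; lra.
      * right. unfold m0; split; field; lra.
    + assert (Hc : c < 0).
      { apply Rnot_le_lt; intro Hc. assert (X1 : 0 <= t * c) by (apply Rmult_le_pos; lra).
        assert (X2 : 0 <= l * ((1 - t) + t * c)) by (apply Rmult_le_pos; lra). unfold m0 in *; lra. }
      exists (m0 / c). split.
      * split.
        -- replace (m0 / c) with ((- m0) * / (- c)) by (field; lra).
           apply Rmult_le_pos; [lra|apply Rlt_le, Rinv_0_lt_compat; lra].
        -- replace (m0 / c) with ((- m0) * / (- c)) by (field; lra).
           apply Rmult_le_reg_r with (- c); [lra|]. rewrite Rmult_assoc, Rinv_l; [|lra].
           assert (Y1 : 0 <= l * (1 - t)) by (apply Rmult_le_pos; lra).
           assert (Y2 : c * 1 <= c * (l * t)) by (apply Rmult_le_compat_neg_l; [lra|apply lmul_le1; lra]).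
           unfold m0; lra.
      * right. unfold m0; split; field; lra.
  - set (N := u1 * u1 + u2 * u2).
    assert (HN : N > 0) by (unfold N; pose proof (Rsqr_pos_lt _ E1); pose proof (Rle_0_sqr u2); unfold Rsqr in *; lra).
    set (c := (u1 * w1 + u2 * w2) / N).
    assert (HN' : u1 * u1 + u2 * u2 <> 0) by (fold N; lra).
    assert (Hw1 : w1 = c * u1).
    { assert (c * u1 - w1 = u2 * (u1 * w2 - u2 * w1) / (u1 * u1 + u2 * u2)) by (unfold c, N; field; auto).
      rewrite H in H0. unfold Rdiv in H0. rewrite Rmult_0_r, Rmult_0_l in H0. lra. }
    assert (Hw2 : w2 = c * u2).
    { assert (c * u2 - w2 = - u1 * (u1 * w2 - u2 * w1) / (u1 * u1 + u2 * u2)) by (unfold c, N; field; auto).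
      rewrite H in H0. unfold Rdiv in H0. rewrite Rmult_0_r, Rmult_0_l in H0. lra. }
    clearbody c. subst w1 w2.
    set (m0 := l * ((1 - t) + t * c)).
    destruct (Rle_dec 0 m0); [destruct (Rle_dec m0 1)|].
    + exists m0; split; [lra|]. left. unfold m0; split; ring.
    + assert (Hc : c > 1).
      { apply Rnot_le_lt; intro Hc. assert (X1 : t * c <= t * 1) by (apply Rmult_le_compat_l; lra).
        assert (X2 : l * ((1 - t) + t * c) <= 1) by (apply lmul_le1; lra). unfold m0 in *; lra. }
      exists (m0 / c). split.
      * split; [apply Rmult_le_pos; [lra|apply Rlt_le, Rinv_0_lt_compat; lra]|].
        apply Rmult_le_reg_r with c; [lra|]. unfold Rdiv; rewrite Rmult_assoc, Rinv_l; [|lra].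
        assert (Y1 : 0 <= (1 - t) * (c - 1)) by (apply Rmult_le_pos; lra).
        assert (Y2 : t * 1 <= t * c) by (apply Rmult_le_compat_l; lra).
        assert (Y3 : l * ((1 - t) + t * c) <= 1 * ((1 - t) + t * c)) by (apply Rmult_le_compat_r; lra).
        unfold m0; lra.
      * right. unfold m0; split; field; lra.
    + assert (Hc : c < 0).
      { apply Rnot_le_lt; intro Hc. assert (X1 : 0 <= t * c) by (apply Rmult_le_pos; lra).
        assert (X2 : 0 <= l * ((1 - t) + t * c)) by (apply Rmult_le_pos; lra). unfold m0 in *; lra. }
      exists (m0 / c). split.
      * split.
        -- replace (m0 / c) with ((- m0) * / (- c)) by (field; lra).
           apply Rmult_le_pos; [lra|apply Rlt_le, Rinv_0_lt_compat; lra].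
        -- replace (m0 / c) with ((- m0) * / (- c)) by (field; lra).
           apply Rmult_le_reg_r with (- c); [lra|]. rewrite Rmult_assoc, Rinv_l; [|lra].
           assert (Y1 : 0 <= l * (1 - t)) by (apply Rmult_le_pos; lra).
           assert (Y2 : c * 1 <= c * (l * t)) by (apply Rmult_le_compat_neg_l; [lra|apply lmul_le1; lra]).
           unfold m0; lra.
      * right. unfold m0; split; field; lra.
Qed.

Definition D0f (x z1 z2 : pt) := (fst z1 - fst x) * (snd z2 - snd x) - (snd z1 - snd x) * (fst z2 - fst x).
Definition alf x z1 z2 := aff ((snd z2 - snd x) / D0f x z1 z2) (- (fst z2 - fst x) / D0f x z1 z2)
  ((snd x * (fst z2 - fst x) - fst x * (snd z2 - snd x)) / D0f x z1 z2).
Definition bef x z1 z2 := aff (- (snd z1 - snd x) / D0f x z1 z2) ((fst z1 - fst x) / D0f x z1 z2)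
  (((snd z1 - snd x) * fst x - (fst z1 - fst x) * snd x) / D0f x z1 z2).

Lemma A_full n adj C f s lam x z1 z2 t : setting n adj C f s lam -> inside s C f x ->
  free (drawing n adj f) x z1 -> free (drawing n adj f) x z2 -> 0 <= t <= 1 ->
  free (drawing n adj f) x (lerp z1 z2 t).
Proof.
  intros HS Hin F1 F2 Ht p [l [Hl ->]].
  destruct (Req_dec (D0f x z1 z2) 0) as [E|E].
  - unfold D0f in E.
    destruct (collin_real (fst z1 - fst x) (snd z1 - snd x) (fst z2 - fst x) (snd z2 - snd x) l t E Hl Ht)
      as [m [Hm [[A1 A2]|[A1 A2]]]].
    + apply F1. exists m. split; auto. unfold lerp, padd, pscale in *; simpl.
      apply injective_projections; simpl; nra.
    + apply F2. exists m. split; auto. unfold lerp, padd, pscale in *; simpl.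
      apply injective_projections; simpl; nra.
  - pose proof (A_nd n adj C f s lam x z1 z2 HS Hin F1 F2 E) as HA.
    change (forall p, 0 <= alf x z1 z2 p -> 0 <= bef x z1 z2 p -> alf x z1 z2 p + bef x z1 z2 p <= 1 ->
       ~ drawing n adj f p) in HA.
    assert (Ax : alf x z1 z2 x = 0) by (unfold alf, aff; field; auto).
    assert (Bx : bef x z1 z2 x = 0) by (unfold bef, aff; field; auto).
    assert (A1 : alf x z1 z2 z1 = 1) by (unfold alf, aff; unfold D0f in *; field; auto).
    assert (B1 : bef x z1 z2 z1 = 0) by (unfold bef, aff; field; auto).
    assert (A2 : alf x z1 z2 z2 = 0) by (unfold alf, aff; field; auto).
    assert (B2 : bef x z1 z2 z2 = 1) by (unfold bef, aff; unfold D0f in *; field; auto).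
    assert (La : forall p q t, alf x z1 z2 (lerp p q t) = (1 - t) * alf x z1 z2 p + t * alf x z1 z2 q)
      by (intros; unfold alf; apply aff_lerp).
    assert (Lb : forall p q t, bef x z1 z2 (lerp p q t) = (1 - t) * bef x z1 z2 p + t * bef x z1 z2 q)
      by (intros; unfold bef; apply aff_lerp).
    apply HA; rewrite ?La, ?Lb, ?La, ?Lb, ?Ax, ?Bx, ?A1, ?B1, ?A2, ?B2; nra.
Qed.

Definition inbox (p : pt) r (q : pt) := Rabs (fst q - fst p) < r /\ Rabs (snd q - snd p) < r.

Lemma seg_box a b p : ~ closed_seg a b p -> exists r, 0 < r /\ forall q, inbox p r q -> ~ closed_seg a b q.
Proof.
  intros Hp.
  set (g := fun t => (fst p - ((1 - t) * fst a + t * fst b)) ^ 2 + (snd p - ((1 - t) * snd a + t * snd b)) ^ 2).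
  destruct (continuity_ab_min g 0 1) as [tm [Hmin Htm]]; [lra| intros; unfold g; reg |].
  assert (Hm : 0 < g tm).
  { unfold g. destruct (Req_dec (fst p - ((1 - tm) * fst a + tm * fst b)) 0) as [E1|E1].
    - destruct (Req_dec (snd p - ((1 - tm) * snd a + tm * snd b)) 0) as [E2|E2].
      + exfalso. apply Hp. exists tm. split; auto. unfold lerp, padd, pscale.
        apply injective_projections; simpl; lra.
      + rewrite E1. pose proof (Rsqr_pos_lt _ E2). unfold Rsqr in H. simpl. lra.
    - pose proof (Rsqr_pos_lt _ E1). unfold Rsqr in H.
      pose proof (pow2_ge_0 (snd p - ((1 - tm) * snd a + tm * snd b))). simpl in *. lra. }
  exists (Rmin 1 (g tm / 4)). split.
  - apply Rmin_glb_lt; lra.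
  - intros q [B1 B2] [t [Ht ->]].
    pose proof (Rmin_l 1 (g tm / 4)). pose proof (Rmin_r 1 (g tm / 4)).
    set (r := Rmin 1 (g tm / 4)) in *.
    specialize (Hmin t Ht). unfold g in Hmin at 2.
    unfold lerp, padd, pscale in B1, B2; simpl in B1, B2.
    apply Rabs_def2 in B1. apply Rabs_def2 in B2.
    set (e1 := (1 - t) * fst a + t * fst b - fst p) in *.
    set (e2 := (1 - t) * snd a + t * snd b - snd p) in *.
    assert (Q : (fst p - ((1 - t) * fst a + t * fst b)) ^ 2 + (snd p - ((1 - t) * snd a + t * snd b)) ^ 2 = e1 * e1 + e2 * e2)
      by (unfold e1, e2; ring).
    rewrite Q in Hmin.
    assert (e1 * e1 <= r * r) by nra. assert (e2 * e2 <= r * r) by nra.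
    assert (r * r <= r * 1) by (apply Rmult_le_compat_l; lra). lra.
Qed.

Lemma box_fin (Pr : nat -> R -> Prop) :
  (forall i r r', 0 < r' <= r -> Pr i r -> Pr i r') ->
  forall N, (forall i, (i < N)%nat -> exists r, 0 < r /\ Pr i r) -> exists r, 0 < r /\ forall i, (i < N)%nat -> Pr i r.
Proof.
  intros Hmono N. induction N; intros H.
  - exists 1; split; [lra|intros; lia].
  - destruct IHN as [r1 [Hr1 H1]]; [intros; apply H; lia|].
    destruct (H N) as [r2 [Hr2 H2]]; [lia|].
    exists (Rmin r1 r2). split; [apply Rmin_glb_lt; auto|].
    intros i Hi. destruct (Nat.eq_dec i N) as [->|Hne].
    + apply Hmono with r2; auto. split; [apply Rmin_glb_lt; auto|apply Rmin_r].
    + apply Hmono with r1; [split; [apply Rmin_glb_lt; auto|apply Rmin_l]|]. apply H1; lia.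
Qed.

Lemma inbox_mono p r r' q : r' <= r -> inbox p r' q -> inbox p r q.
Proof. unfold inbox; intros; lra. Qed.

Lemma ball_free n adj C f s lam p : setting n adj C f s lam -> ~ drawing n adj f p ->
  exists r, 0 < r /\ forall q, inbox p r q -> ~ drawing n adj f q.
Proof.
  intros HS Hp.
  assert (Hseg : forall a b, ~ closed_seg a b p -> forall r r', 0 < r' <= r ->
     (forall q, inbox p r q -> ~ closed_seg a b q) -> (forall q, inbox p r' q -> ~ closed_seg a b q)).
  { intros a b _ r r' Hr H q Hq. apply H. apply inbox_mono with r'; lra || auto. }
  assert (M1 : forall (i : nat) (r r' : R), 0 < r' <= r -> (forall q, inbox p r q -> ~ closed_seg (f i) (f i) q) ->
             forall q, inbox p r' q -> ~ closed_seg (f i) (f i) q).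
  { intros i r r' Hr H q Hq. apply H. apply inbox_mono with r'; [lra|auto]. }
  assert (A1 : forall v, (v < n)%nat -> exists r, 0 < r /\ forall q, inbox p r q -> ~ closed_seg (f v) (f v) q).
  { intros v Hv. apply seg_box. intros [t [_ E]]. apply Hp. left. exists v. split; auto.
    rewrite E. unfold lerp, padd, pscale. apply injective_projections; simpl; ring. }
  destruct (box_fin _ M1 n A1) as [r1 [Hr1 H1]].
  assert (M2 : forall (u : nat) (r r' : R), 0 < r' <= r ->
     (forall v, (v < n)%nat -> adj u v -> forall q, inbox p r q -> ~ closed_seg (f u) (f v) q) ->
     (forall v, (v < n)%nat -> adj u v -> forall q, inbox p r' q -> ~ closed_seg (f u) (f v) q)).
  { intros i r r' Hr H v Hv Ha q Hq. apply (H v Hv Ha). apply inbox_mono with r'; [lra|auto]. }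
  assert (A2 : forall u, (u < n)%nat -> exists r, 0 < r /\ (forall v, (v < n)%nat -> adj u v -> forall q, inbox p r q -> ~ closed_seg (f u) (f v) q)).
  { intros u Hu.
    assert (M3 : forall (v : nat) (r r' : R), 0 < r' <= r ->
       (adj u v -> forall q, inbox p r q -> ~ closed_seg (f u) (f v) q) ->
       (adj u v -> forall q, inbox p r' q -> ~ closed_seg (f u) (f v) q)).
    { intros i r r' Hr H Ha q Hq. apply (H Ha). apply inbox_mono with r'; [lra|auto]. }
    assert (A3 : forall v, (v < n)%nat -> exists r, 0 < r /\ (adj u v -> forall q, inbox p r q -> ~ closed_seg (f u) (f v) q)).
    { intros v Hv. destruct (classic (adj u v)) as [Ha|Ha].
      + destruct (seg_box (f u) (f v) p) as [r [Hr H]].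
        * intro Hs. apply Hp. right. exists u, v. auto.
        * exists r; split; auto.
      + exists 1; split; [lra|]. intros; contradiction. }
    destruct (box_fin _ M3 n A3) as [r3 [Hr3 H3]].
    exists r3; split; [auto|]. intros v Hv Ha. apply (H3 v Hv Ha). }
  destruct (box_fin _ M2 n A2) as [r2 [Hr2 H2]].
  exists (Rmin r1 r2). split; [apply Rmin_glb_lt; auto|].
  intros q Hq [[v [Hv ->]] | [u [v [Ha Hs]]]].
  - apply (H1 v Hv (f v)).
    + apply inbox_mono with (Rmin r1 r2); [apply Rmin_l|auto].
    + exists 0. split; [lra|]. unfold lerp, padd, pscale. apply injective_projections; simpl; ring.
  - destruct (S_sg _ _ _ _ _ _ HS) as [Hb _]. destruct (Hb u v Ha) as [Hu Hv].
    apply (H2 u Hu v Hv Ha q); auto.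
    apply inbox_mono with (Rmin r1 r2); [apply Rmin_r|auto].
Qed.

Lemma cont_eps h : continuity h -> forall s e, 0 < e -> exists d, 0 < d /\ forall t, Rabs (t - s) < d -> Rabs (h t - h s) < e.
Proof.
  intros Hc s e He. destruct (Hc s e He) as [d [Hd H]]. exists d. split; [lra|].
  intros t Ht. destruct (Req_dec t s) as [->|Hne].
  - rewrite Rminus_diag, Rabs_R0; auto.
  - apply (H t). split; [split; [exact I|auto]|]. simpl. unfold R_dist. auto.
Qed.

Lemma inbox_seg p r a b q : inbox p r a -> inbox p r b -> closed_seg a b q -> inbox p r q.
Proof.
  intros [A1 A2] [B1 B2] [t [Ht ->]]. unfold inbox, lerp, padd, pscale in *; simpl.
  apply Rabs_def2 in A1, A2, B1, B2.
  assert (K : forall A B, - r < A < r -> - r < B < r -> - r < (1 - t) * A + t * B < r).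
  { intros A B HA HB. destruct (Req_dec t 1) as [->|Ht1].
    - lra.
    - assert ((1 - t) * A < (1 - t) * r) by (apply Rmult_lt_compat_l; lra).
      assert ((1 - t) * (- r) < (1 - t) * A) by (apply Rmult_lt_compat_l; lra).
      assert (t * B <= t * r) by (apply Rmult_le_compat_l; lra).
      assert (t * (- r) <= t * B) by (apply Rmult_le_compat_l; lra).
      lra. }
  split; apply Rabs_def1.
  - replace ((1 - t) * fst a + t * fst b - fst p) with ((1 - t) * (fst a - fst p) + t * (fst b - fst p)) by ring.
    apply K; lra.
  - replace ((1 - t) * fst a + t * fst b - fst p) with ((1 - t) * (fst a - fst p) + t * (fst b - fst p)) by ring.
    apply K; lra.
  - replace ((1 - t) * snd a + t * snd b - snd p) with ((1 - t) * (snd a - snd p) + t * (snd b - snd p)) by ring.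
    apply K; lra.
  - replace ((1 - t) * snd a + t * snd b - snd p) with ((1 - t) * (snd a - snd p) + t * (snd b - snd p)) by ring.
    apply K; lra.
Qed.

Lemma inbox_self p r : 0 < r -> inbox p r p.
Proof. intros. unfold inbox. rewrite !Rminus_diag, Rabs_R0. auto. Qed.

Lemma seg_end a b : closed_seg a b b.
Proof. exists 1. split; [lra|]. unfold lerp, padd, pscale. apply injective_projections; simpl; ring. Qed.

Lemma seg_sym a b p : closed_seg a b p -> closed_seg b a p.
Proof. intros [t [Ht ->]]. exists (1 - t). split; [lra|]. unfold lerp, padd, pscale.
  apply injective_projections; simpl; ring. Qed.

Lemma openness n adj C f s lam x z : setting n adj C f s lam -> inside s C f x ->
  free (drawing n adj f) x z -> exists r, 0 < r /\ forall q, inbox z r q -> free (drawing n adj f) x q.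
Proof.
  intros HS Hin Fz.
  assert (Hz : ~ drawing n adj f z) by (apply Fz; apply seg_end).
  destruct (ball_free _ _ _ _ _ _ z HS Hz) as [r [Hr Hb]].
  exists r. split; auto. intros q Hq p Hp.
  assert (Iz : inside s C f z) by (apply (propagate _ _ _ _ _ _ x z HS Hin Fz)).
  assert (Fzq : free (drawing n adj f) z q).
  { intros y Hy. apply Hb. apply inbox_seg with z q; auto. apply inbox_self; auto. }
  assert (Fzx : free (drawing n adj f) z x).
  { intros y Hy. apply Fz. apply seg_sym; auto. }
  destruct Hp as [t [Ht ->]].
  apply (A_full _ _ _ _ _ _ z x q t HS Iz Fzx Fzq Ht). apply seg_end.
Qed.

Lemma path_free n adj C f s lam x g : setting n adj C f s lam -> inside s C f x ->
  continuity (fun t => fst (g t)) -> continuity (fun t => snd (g t)) -> g 0 = x ->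
  (forall t, 0 <= t <= 1 -> ~ drawing n adj f (g t)) -> free (drawing n adj f) x (g 1).
Proof.
  intros HS Hin C1 C2 G0 Hav.
  set (Dr := drawing n adj f) in *.
  assert (Cg : forall s e, 0 < e -> exists d, 0 < d /\ forall t, Rabs (t - s) < d -> inbox (g s) e (g t)).
  { intros s0 e He. destruct (cont_eps _ C1 s0 e He) as [d1 [Hd1 H1]]. destruct (cont_eps _ C2 s0 e He) as [d2 [Hd2 H2]].
    exists (Rmin d1 d2). split; [apply Rmin_glb_lt; auto|]. intros t Ht. split.
    - apply H1. pose proof (Rmin_l d1 d2). lra.
    - apply H2. pose proof (Rmin_r d1 d2). lra. }
  assert (Hx : ~ Dr x) by (rewrite <- G0; apply Hav; lra).
  set (E := fun t => 0 <= t <= 1 /\ forall t', 0 <= t' <= t -> free Dr x (g t')).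
  assert (E0 : E 0).
  { split; [lra|]. intros t' Ht'. replace t' with 0 by lra. rewrite G0. intros p [l [Hl ->]].
    replace (lerp x x l) with x; auto. unfold lerp, padd, pscale. apply injective_projections; simpl; ring. }
  destruct (completeness E) as [s0 [Hub Hlub]].
  { exists 1. intros t [Ht _]. lra. }
  { exists 0; auto. }
  assert (Hs0 : 0 <= s0 <= 1).
  { split; [apply Hub; auto|]. apply Hlub. intros t [Ht _]. lra. }
  assert (Cl1 : forall t', 0 <= t' < s0 -> free Dr x (g t')).
  { intros t' Ht'. apply NNPP; intro Hno.
    assert (s0 <= t').
    { apply Hlub. intros e [He Hall]. apply Rnot_lt_le; intro Hl. apply Hno. apply Hall. lra. }
    lra. }
  assert (Cl2 : free Dr x (g s0)).
  { intros p [l [Hl ->]].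
    destruct (Req_dec l 1) as [->|Hl1].
    - replace (lerp x (g s0) 1) with (g s0) by (unfold lerp, padd, pscale; apply injective_projections; simpl; ring).
      apply Hav; auto.
    - destruct (Req_dec s0 0) as [E0'|Hs00].
      + rewrite E0', G0. replace (lerp x x l) with x; auto.
        unfold lerp, padd, pscale. apply injective_projections; simpl; ring.
      + destruct (ball_free _ _ _ _ _ _ x HS Hx) as [r [Hr Hb]].
        set (e := r * (1 - l) / 2).
        assert (He : 0 < e) by (unfold e; apply Rmult_lt_0_compat; [apply Rmult_lt_0_compat|]; lra).
        destruct (Cg s0 e He) as [d [Hd Hgd]].
        set (t := Rmax 0 (s0 - d / 2)).
        assert (Ht : 0 <= t < s0 /\ Rabs (t - s0) < d).
        { unfold t. destruct (Rle_dec 0 (s0 - d / 2)).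
          - rewrite Rmax_right by lra. split; [lra|]. rewrite Rabs_left by lra. lra.
          - rewrite Rmax_left by lra. split; [lra|]. rewrite Rabs_left by lra. lra. }
        set (q := g t).
        assert (Fq : free Dr x q) by (apply Cl1; lra).
        destruct (Hgd t (proj2 Ht)) as [Q1 Q2]. fold q in Q1, Q2.
        set (k := l / (1 - l)).
        assert (Hk : 0 <= k /\ k * (1 - l) = l).
        { unfold k. split; [apply Rmult_le_pos; [lra|apply Rlt_le, Rinv_0_lt_compat; lra]|]. field; lra. }
        set (x' := (fst x + k * (fst (g s0) - fst q), snd x + k * (snd (g s0) - snd q))).
        assert (Bx' : inbox x r x').
        { unfold inbox, x'; simpl.
          replace (fst x + k * (fst (g s0) - fst q) - fst x) with (- (k * (fst q - fst (g s0)))) by ring.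
          replace (snd x + k * (snd (g s0) - snd q) - snd x) with (- (k * (snd q - snd (g s0)))) by ring.
          rewrite !Rabs_Ropp, !Rabs_mult, (Rabs_pos_eq k) by lra.
          assert (k * Rabs (fst q - fst (g s0)) <= k * e) by (apply Rmult_le_compat_l; lra).
          assert (k * Rabs (snd q - snd (g s0)) <= k * e) by (apply Rmult_le_compat_l; lra).
          assert (k * e = l * r / 2) by (unfold e; replace (k * (r * (1 - l) / 2)) with ((k * (1 - l)) * r / 2) by field; rewrite (proj2 Hk); reflexivity).
          assert (l * r <= r) by (rewrite <- (Rmult_1_l r) at 2; apply Rmult_le_compat_r; lra).
          split; lra. }
        assert (Fx' : free Dr x x').
        { intros y Hy. apply Hb. apply inbox_seg with x x'; auto. apply inbox_self; auto. }
        assert (Eq : lerp x' q l = lerp x (g s0) l).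
        { unfold lerp, padd, pscale, x'. simpl. destruct Hk as [_ Hk].
          apply injective_projections; simpl; apply Rminus_diag_uniq.
          - match goal with |- ?A - ?B = 0 => replace (A - B) with ((k * (1 - l) - l) * (fst (g s0) - fst q)) by ring end.
            rewrite Hk; ring.
          - match goal with |- ?A - ?B = 0 => replace (A - B) with ((k * (1 - l) - l) * (snd (g s0) - snd q)) by ring end.
            rewrite Hk; ring. }
        rewrite <- Eq. apply (A_full _ _ _ _ _ _ x x' q l HS Hin Fx' Fq); [lra|]. apply seg_end. }
  assert (Hs1 : s0 = 1).
  { apply NNPP; intro Hne.
    destruct (openness _ _ _ _ _ _ x (g s0) HS Hin Cl2) as [r [Hr Ho]].
    destruct (Cg s0 r Hr) as [d [Hd Hgd]].
    set (s' := Rmin 1 (s0 + d / 2)).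
    assert (Es' : E s').
    { split.
      - unfold s'. split; [apply Rmin_glb; lra|apply Rmin_l].
      - intros t' Ht'. destruct (Rlt_dec t' s0) as [Hlt|Hge].
        + apply Cl1; lra.
        + apply Ho, Hgd. pose proof (Rmin_r 1 (s0 + d / 2)). fold s' in H.
          rewrite Rabs_pos_eq by lra. lra. }
    specialize (Hub s' Es'). unfold s' in Hub.
    destruct (Rle_dec 1 (s0 + d / 2)).
    - rewrite Rmin_left in Hub by lra. lra.
    - rewrite Rmin_right in Hub by lra. lra. }
  rewrite <- Hs1. auto.
Qed.

Theorem lemma1p3 (n : nat) (adj : nat -> nat -> Prop) (C : list nat) (f : nat -> pt) :
  simple_graph n adj ->
  simple_cycle n adj C ->
  convex_combination_map n adj C f ->
  is_embedding n adj f ->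
  forall F : pt -> Prop, face n adj f F -> bounded_region F -> convex_set F.
Proof.
  intros Hsg Hsc [Hinj [[Hk [s [Hs Hpoly]]] [lam Hlam]]] Hemb F [x0 [Hx0 HF]] Hbd.
  assert (HS : setting n adj C f s lam) by (constructor; auto).
  assert (Hin : inside s C f x0) by (apply (bounded_inside _ _ _ _ _ _ x0 F HS Hx0 HF Hbd)).
  assert (Fr : forall x, F x -> free (drawing n adj f) x0 x).
  { intros x Hx. apply HF in Hx. destruct Hx as [g [C1 [C2 [G0 [G1 Hav]]]]].
    rewrite <- G1. apply (path_free _ _ _ _ _ _ x0 g HS Hin C1 C2 G0 Hav). }
  intros x y t Hx Hy Ht.
  pose proof (A_full _ _ _ _ _ _ x0 x y t HS Hin (Fr x Hx) (Fr y Hy) Ht) as Hw.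
  set (w := lerp x y t) in *.
  apply HF. exists (fun tau => lerp x0 w tau). unfold lerp, padd, pscale; simpl.
  split; [reg|]. split; [reg|]. split; [|split].
  - apply injective_projections; simpl; ring.
  - apply injective_projections; simpl; ring.
  - intros tau Htau. apply Hw. exists tau. split; auto.
Qed.
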